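(* Let $n\ge r\ge1$, let $\mathcal{O}\subset\mathbb{R}^{n\times r}$ be open with ${\rm St}(n,r)\subset\mathcal{O}$ and $f:\mathcal{O}\to\mathbb{R}$ continuously differentiable. A matrix $X\in\mathcal{S}_{+}^{n,r}$ satisfies \[ 0\in\nabla f(X)+{\rm N}_X M+\mathcal{N}_{\mathbb{R}_{+}^{n\times r}}(X) \] if and only if $-\nabla f(X)\in[\mathcal{T}_{\mathcal{S}_{+}^{n,r}}(X)]^{\circ}$.
   Context: $M={\rm St}(n,r):=\{X\in\mathbb{R}^{n\times r}: X^\top X=I_r\}$, with normal space ${\rm N}_XM=\{XS: S\in\mathbb{R}^{r\times r}\text{ symmetric}\}$. $\mathbb{R}_{+}^{n\times r}$ is the entrywise nonnegative cone, $\mathcal{S}_{+}^{n,r}:=\mathbb{R}_{+}^{n\times r}\cap{\rm St}(n,r)$, $\mathcal{N}_{\mathbb{R}_{+}^{n\times r}}(X)$ is the normal cone of convex analysis, $\mathcal{T}_{\Omega}(X)$ is the (Bouligand) tangent cone of $\Omega$ at $X$, and $K^\circ:=\{V:\langle V,H\rangle\le0\ \forall H\in K\}$ is the negative polar of a cone $K$ with respect to the trace inner product. (The first condition is the paper's definition of a stationary point of $\min_{X\in\mathcal{S}_{+}^{n,r}}f(X)$.) *)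

(* Defs.v *)
From HB Require Import structures.
From mathcomp Require Import all_boot all_order all_algebra.
From mathcomp Require Import all_classical all_reals all_analysis.
Set Implicit Arguments. Unset Strict Implicit. Unset Printing Implicit Defensive.
Import Order.TTheory GRing.Theory Num.Theory.
Import numFieldNormedType.Exports.
Local Open Scope classical_set_scope.
Local Open Scope ring_scope.

Section Defs.
Context {R : realType} {n r : nat}.
Notation M := 'M[R]_(n, r).

Definition mxinner (A B : M) : R := \tr (A^T *m B).

Definition Stiefel : set M := [set X | X^T *m X = 1%:M].

Definition nonneg_cone : set M := [set X | forall i j, 0 <= X i j].

Definition nonneg_Stiefel : set M := nonneg_cone `&` Stiefel.

Definition stiefel_normal_space (X : M) : set M :=
  [set V | exists S : 'M[R]_r, S^T = S /\ V = X *m S].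

Definition normal_cone (C : set M) (X : M) : set M :=
  [set V | forall Y, C Y -> mxinner V (Y - X) <= 0].

Definition tangent_cone (Omega : set M) (X : M) : set M :=
  [set H | exists (t : nat -> R) (Y : nat -> M),
     (forall k, 0 < t k) /\ t @ \oo --> (0 : R) /\
     (forall k, Omega (Y k)) /\
     (fun k => (t k)^-1 *: (Y k - X)) @ \oo --> H].

Definition polar (K : set M) : set M :=
  [set V | forall H, K H -> mxinner V H <= 0].

(* gradient w.r.t. the trace inner product: entries of the Frechet derivative *)
Definition grad (f : M -> R) (X : M) : M :=
  \matrix_(i, j) ('d f X (delta_mx i j : M)).

End Defs.

(* Main.v *)
Require Import Defs.
From HB Require Import structures.
From mathcomp Require Import all_boot all_order all_algebra.
From mathcomp Require Import all_classical all_reals all_analysis.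
From mathcomp Require Import ring lra.
Set Implicit Arguments. Unset Strict Implicit. Unset Printing Implicit Defensive.
Import Order.TTheory GRing.Theory Num.Theory.
Import numFieldNormedType.Exports.
Local Open Scope classical_set_scope.
Local Open Scope ring_scope.

Section H.
Context {R : realType} {n r : nat}.
Notation M := 'M[R]_(n, r).

Lemma mxinnerE (A B : M) : mxinner A B = \sum_i \sum_j A i j * B i j.
Proof.
rewrite /mxinner /mxtrace exchange_big /=; apply: eq_bigr => j _.
rewrite !mxE; apply: eq_bigr => i _; by rewrite mxE.
Qed.

Lemma mxinnerDl (A B C : M) : mxinner (A + B) C = mxinner A C + mxinner B C.
Proof. by rewrite /mxinner linearD /= mulmxDl mxtraceD. Qed.

Lemma mxinnerNl (A C : M) : mxinner (- A) C = - mxinner A C.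
Proof. by rewrite /mxinner linearN /= mulNmx linearN. Qed.

Lemma mxinnerZr (A C : M) a : mxinner A (a *: C) = a * mxinner A C.
Proof. by rewrite /mxinner -scalemxAr mxtraceZ. Qed.

Lemma mxinnerBr (A B C : M) : mxinner A (B - C) = mxinner A B - mxinner A C.
Proof. by rewrite /mxinner mulmxBr linearB. Qed.

Lemma entry_continuous (m k : nat) (i : 'I_m) (j : 'I_k) :
  continuous (fun A : 'M[R]_(m, k) => A i j).
Proof.
move=> u A /nbhs_ballP[e /= e0 eA].
apply/nbhs_ballP; exists e => //= v [_ uv]; apply: eA.
exact: uv.
Qed.

Lemma cvg_entry (m k : nat) (D : nat -> 'M[R]_(m, k)) (H : 'M[R]_(m, k)) i j :
  D @ \oo --> H -> (fun q => D q i j) @ \oo --> H i j.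
Proof. move=> DH; have := continuous_cvg _ (@entry_continuous m k i j H) DH; exact. Qed.

Lemma cvg_sumr (I : finType) (u : I -> nat -> R) (l : I -> R) :
  (forall i, u i @ \oo --> l i) ->
  (fun q => \sum_i u i q) @ \oo --> \sum_i l i.
Proof.
move=> h; apply: (@cvg_big _ _ +%R 0 predT _ _ _ _ _ _ _) => //.
exact: add_continuous.
Qed.

Lemma cvg_inner (V : M) (D : nat -> M) (H : M) :
  D @ \oo --> H -> (fun q => mxinner V (D q)) @ \oo --> mxinner V H.
Proof.
move=> DH; under eq_cvg do rewrite mxinnerE.
rewrite mxinnerE; apply: cvg_sumr => i; apply: cvg_sumr => j.
apply: cvgMr; exact: cvg_entry.
Qed.


Lemma key_identity (X D : M) (S : 'M[R]_r) t :
  X^T *m X = 1%:M -> (X + t *: D)^T *m (X + t *: D) = 1%:M -> t != 0 -> S^T = S ->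
  mxinner (X *m S) D *+ 2 = - (t * mxinner (D *m S) D).
Proof.
move=> hX hY t0 hS.
have K0 : X^T *m D + D^T *m X + t *: (D^T *m D) = 0.
  have : t *: (X^T *m D + D^T *m X + t *: (D^T *m D)) = 0.
    move: hY; rewrite [_^T]linearD /= [(_ *: _)^T]linearZ /= mulmxDl !mulmxDr hX.
    rewrite -!scalemxAl -!scalemxAr scalerA => /eqP.
    rewrite -subr_eq0 => /eqP <-.
    by rewrite !scalerDr scalerA [RHS]addrAC [1%:M + _]addrC addrK addrA.
  by move/eqP; rewrite scaler_eq0 (negbTE t0) /= => /eqP.
have : \tr (S *m (X^T *m D + D^T *m X + t *: (D^T *m D))) = 0 by rewrite K0 mulmx0 mxtrace0.
rewrite !mulmxDr !mxtraceD -scalemxAr mxtraceZ.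
have e1 : \tr (S *m (D^T *m X)) = \tr (S *m (X^T *m D)).
  by rewrite -mxtrace_tr !trmx_mul trmxK hS mxtrace_mulC mulmxA.
rewrite e1 /mxinner !trmx_mul hS -!mulmxA => /eqP.
by rewrite -mulr2n addr_eq0 => /eqP.
Qed.


Lemma cvg_inner2 (S : 'M[R]_r) (D : nat -> M) (H : M) :
  D @ \oo --> H ->
  (fun q => mxinner (D q *m S) (D q)) @ \oo --> mxinner (H *m S) H.
Proof.
move=> DH; under eq_cvg do rewrite mxinnerE.
rewrite mxinnerE; apply: cvg_sumr => i; apply: cvg_sumr => j.
apply: cvgM; last exact: cvg_entry.
under eq_cvg do rewrite mxE.
rewrite mxE; apply: cvg_sumr => c; apply: cvgMl; exact: cvg_entry.
Qed.

Lemma polar_N (X : M) (S : 'M[R]_r) H : Stiefel X -> S^T = S ->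
  tangent_cone nonneg_Stiefel X H -> mxinner (X *m S) H = 0.
Proof.
move=> hX hS [t [Y [tp [t0 [YS DH]]]]].
set D := fun k => (t k)^-1 *: (Y k - X).
have eY k : Y k = X + t k *: D k.
  by rewrite /D scalerA divff ?gt_eqF // scale1r addrC subrK.
have id k : mxinner (X *m S) (D k) = - (t k * mxinner (D k *m S) (D k)) / 2.
  have := @key_identity X (D k) S (t k) hX _ (lt0r_neq0 (tp k)) hS.
  rewrite -eY; move/(_ (proj2 (YS k))) => <-.
  by rewrite -mulr_natr; field.
have c1 := @cvg_inner (X *m S) _ _ DH.
have c2 : (fun k => mxinner (X *m S) (D k)) @ \oo --> (0:R).
  under eq_cvg do rewrite id.
  have h1 : (fun k => - (t k * mxinner (D k *m S) (D k))) @ \oo --> - (0 * mxinner (H *m S) H).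
    apply: cvgN; have := cvgM t0 (@cvg_inner2 S _ _ DH); apply.
  have h2 := cvgMl (b := 2^-1) h1.
  rewrite mul0r oppr0 mul0r in h2; exact: h2.
exact: (cvg_unique _ c1 c2).
Qed.

Lemma polar_V (X V : M) H : normal_cone nonneg_cone X V ->
  tangent_cone nonneg_Stiefel X H -> mxinner V H <= 0.
Proof.
move=> hV [t [Y [tp [t0 [YS DH]]]]].
have c1 := @cvg_inner V _ _ DH.
apply: (ler_cvg_to c1 (cvg_cst (0:R))).
near=> k; rewrite mxinnerZr.
apply: mulr_ge0_le0; first by rewrite invr_ge0 ltW.
exact: hV (proj1 (YS k)).
Unshelve. all: by end_near. Qed.


Lemma cvg_rho (t : nat -> R) c : t @ \oo --> (0:R) ->
  (fun k => Num.sqrt (1 + t k * t k * c)) @ \oo --> (1:R).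
Proof.
move=> t0.
have h1 : (fun k => 1 + t k * t k * c) @ \oo --> (1 + 0 * 0 * c : R).
  apply: cvgD; first exact: cvg_cst.
  apply: cvgMl; exact: (cvgM t0 t0).
have := continuous_cvg _ (@sqrt_continuous R (1 + 0 * 0 * c)) h1.
by rewrite !mul0r addr0 sqrtr1; apply.
Qed.


Definition Ycv (X : M) i j (p q : R) : M :=
  \matrix_(c, a) (if a == j then p * X c j + q * (c == i)%:R else X c a).

Lemma sum_delta (i : 'I_n) (f : 'I_n -> R) : \sum_c (c == i)%:R * f c = f i.
Proof.
rewrite (bigD1 i) //= eqxx mul1r big1 ?addr0 // => c /negbTE ->; by rewrite mul0r.
Qed.

Lemma stiefel_entry (X : M) : Stiefel X -> forall a b, \sum_c X c a * X c b = (a == b)%:R.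
Proof.
move=> hX a b; have := congr1 (fun A : 'M[R]_r => A a b) (hX : X^T *m X = 1%:M); rewrite !mxE /= => <-.
by apply: eq_bigr => c _; rewrite mxE.
Qed.

Lemma sum_lin (X : M) i j p q (f : 'I_n -> R) :
  \sum_c (p * X c j + q * (c == i)%:R) * f c = p * \sum_c X c j * f c + q * f i.
Proof.
rewrite -(sum_delta i f) mulr_sumr mulr_sumr -big_split /=.
by apply: eq_bigr => c _; rewrite mulrDl !mulrA.
Qed.

Lemma Ycv_stiefel (X : M) i j p q : Stiefel X -> (forall b, b != j -> X i b = 0) ->
  p ^+ 2 + 2 * p * q * X i j + q ^+ 2 = 1 -> Stiefel (Ycv X i j p q).
Proof.
move=> hX hrow hpq; have hE := stiefel_entry hX.
rewrite /Stiefel; apply/matrixP => a b; rewrite !mxE.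
under eq_bigr do rewrite !mxE.
have [ha|aj] := eqVneq a j; have [hb|bj] := eqVneq b j.
- rewrite ha hb eqxx sum_lin.
  under eq_bigr do rewrite mulrC.
  rewrite sum_lin hE !eqxx /=; apply: etrans hpq; ring.
- by rewrite ha sum_lin hE hrow // [j == b]eq_sym (negbTE bj) !mulr0 addr0.
- rewrite hb.
  under eq_bigr do rewrite mulrC.
  by rewrite sum_lin hE (negbTE aj) hrow // eq_sym (negbTE aj) mulr0 mulr0 addr0.
- by rewrite hE.
Qed.


Lemma Ycv_nonneg (X : M) i j p q : nonneg_cone X -> 0 <= p -> 0 <= p * X i j + q ->
  nonneg_cone (Ycv X i j p q).
Proof.
move=> hX hp hq c a; rewrite mxE; case: eqP => [_ | _]; last exact: hX.
have [-> | ci] := eqVneq c i; first by rewrite mulr1.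
by rewrite mulr0 addr0 mulr_ge0.
Qed.

Lemma XE_entry (X : M) j c a : (X *m delta_mx j j) c a = X c j * (a == j)%:R.
Proof.
rewrite mxE (bigD1 j) //= big1 ?addr0 => [| d dj]; rewrite mxE.
  by rewrite eqxx.
by rewrite (negbTE dj) mulr0.
Qed.

Lemma Ycv_diff (X : M) i j p q :
  Ycv X i j p q - X = (p - 1) *: (X *m delta_mx j j) + q *: delta_mx i j.
Proof.
apply/matrixP => c a; rewrite [LHS]mxE [RHS]mxE [X in _ = X + _]mxE XE_entry !mxE.
case: eqP => [ha | _]; rewrite ?andbT ?andbF /=.
  rewrite !mulr1 ha; ring.
by rewrite subrr !mulr0 addr0.
Qed.

Lemma tangent_gen (X : M) i j (t p q : nat -> R) (al be : R) :
  nonneg_Stiefel X -> (forall b, b != j -> X i b = 0) ->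
  (forall k, 0 < t k) -> t @ \oo --> (0:R) ->
  (forall k, p k ^+ 2 + 2 * p k * q k * X i j + q k ^+ 2 = 1) ->
  (forall k, 0 <= p k) -> (forall k, 0 <= p k * X i j + q k) ->
  (fun k => (p k - 1) / t k) @ \oo --> al ->
  (fun k => q k / t k) @ \oo --> be ->
  tangent_cone nonneg_Stiefel X (al *: (X *m delta_mx j j) + be *: delta_mx i j).
Proof.
move=> [hX0 hX1] hrow tp t0 hpq hp hq ha hb.
exists t, (fun k => Ycv X i j (p k) (q k)); split => //; split => //; split.
  move=> k; split; [exact: Ycv_nonneg | exact: Ycv_stiefel].
under eq_cvg do rewrite Ycv_diff scalerDr !scalerA [(t _)^-1 * _]mulrC [(t _)^-1 * _]mulrC.
apply: cvgD; apply: cvgZ => //; exact: cvg_cst.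
Qed.


Lemma alg1 (s t x rho : R) : 0 < rho -> rho ^+ 2 = 1 + t * t * (1 - x ^+ 2) -> s ^+ 2 = 1 ->
  ((1 - s * t * x) / rho) ^+ 2 + 2 * ((1 - s * t * x) / rho) * (s * t / rho) * x
  + (s * t / rho) ^+ 2 = 1.
Proof.
move=> rp hr hs; apply/eqP; rewrite -subr_eq0.
have -> : ((1 - s * t * x) / rho) ^+ 2 + 2 * ((1 - s * t * x) / rho) * (s * t / rho) * x
  + (s * t / rho) ^+ 2 - 1 =
  ((s ^+ 2 - 1) * (t * t * (1 - x ^+ 2)) + (1 + t * t * (1 - x ^+ 2) - rho ^+ 2)) / rho ^+ 2.
  by field; rewrite gt_eqF.
by rewrite hs hr !subrr mul0r add0r mul0r.
Qed.

Lemma alg2 (s t x rho : R) : t != 0 -> 0 < rho -> rho ^+ 2 = 1 + t * t * (1 - x ^+ 2) ->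
  ((1 - s * t * x) / rho - 1) / t = (- (s * x) - t * (1 - x ^+ 2) / (1 + rho)) / rho.
Proof.
move=> t0 rp hr; apply/eqP; rewrite -subr_eq0.
have -> : ((1 - s * t * x) / rho - 1) / t - (- (s * x) - t * (1 - x ^+ 2) / (1 + rho)) / rho
  = - (rho ^+ 2 - (1 + t * t * (1 - x ^+ 2))) / (t * rho * (1 + rho)).
  field; rewrite t0 (gt_eqF rp) /= andbT; apply: lt0r_neq0.
  by rewrite (lt_le_trans rp) // lerDr.
by rewrite hr subrr oppr0 mul0r.
Qed.


Lemma entry_sq_le1 (X : M) : Stiefel X -> forall i j, X i j ^+ 2 <= 1.
Proof.
move=> hX i j; have := stiefel_entry hX j j; rewrite eqxx mulr1n => <-.
rewrite (bigD1 i) //= expr2 lerDl sumr_ge0 // => c _.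
by rewrite -expr2 sqr_ge0.
Qed.

Lemma tangent_sigma (X : M) i j (sg s : R) : nonneg_Stiefel X ->
  (forall b, b != j -> X i b = 0) -> sg ^+ 2 = 1 -> 0 < s ->
  (forall u, 0 < u -> u <= s ->
     0 <= 1 - sg * u * X i j /\ 0 <= X i j - sg * u * X i j ^+ 2 + sg * u) ->
  tangent_cone nonneg_Stiefel X (sg *: (delta_mx i j - X i j *: (X *m delta_mx j j))).
Proof.
move=> hX hrow hs s0 hu.
have c0 : 0 <= 1 - X i j ^+ 2 by rewrite subr_ge0 (entry_sq_le1 (proj2 hX)).
pose t k := s / k.+1%:R.
have tp k : 0 < t k by rewrite divr_gt0.
have ts k : t k <= s.
  rewrite ler_pdivrMr //; apply: ler_peMr; [exact: ltW | by rewrite ler1n].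
have t0 : t @ \oo --> (0:R).
  have := cvgMr (a := s) (@cvg_harmonic R); rewrite mulr0; apply.
pose rho k := Num.sqrt (1 + t k * t k * (1 - X i j ^+ 2)).
have pos k : 0 < 1 + t k * t k * (1 - X i j ^+ 2).
  have : 0 <= t k * t k * (1 - X i j ^+ 2) by rewrite mulr_ge0 // mulr_ge0 // ltW.
  lra.
have rp k : 0 < rho k by rewrite sqrtr_gt0.
have hr k : rho k ^+ 2 = 1 + t k * t k * (1 - X i j ^+ 2) by rewrite sqr_sqrtr // ltW.
have rc : rho @ \oo --> (1:R) by exact: cvg_rho.
pose p k := (1 - sg * t k * X i j) / rho k.
pose q k := sg * t k / rho k.
have -> : sg *: (delta_mx i j - X i j *: (X *m delta_mx j j)) =
    (- (sg * X i j)) *: (X *m delta_mx j j) + sg *: delta_mx i j.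
  by rewrite scalerBr scalerA addrC scaleNr.
apply: (@tangent_gen X i j t p q) => //.
- by move=> k; exact: alg1.
- by move=> k; apply: divr_ge0; [exact: (proj1 (hu _ (tp k) (ts k))) | exact: ltW].
- move=> k; have -> : p k * X i j + q k = (X i j - sg * t k * X i j ^+ 2 + sg * t k) / rho k.
    by rewrite /p /q; field; rewrite gt_eqF.
  by apply: divr_ge0; [exact: (proj2 (hu _ (tp k) (ts k))) | exact: ltW].
- have e : (fun k => (p k - 1) / t k) =
      (fun k => (- (sg * X i j) - t k * (1 - X i j ^+ 2) / (1 + rho k)) / rho k).
    by apply: funext => k; rewrite /p alg2 // gt_eqF.
  rewrite e.
  have h1 : (fun k => 1 + rho k) @ \oo --> (1 + 1 : R) by apply: cvgD => //; exact: cvg_cst.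
  have h2 : (fun k => t k * (1 - X i j ^+ 2)) @ \oo --> (0 * (1 - X i j ^+ 2) : R).
    exact: cvgMl.
  have n2 : (1 + 1 : R) != 0 by apply: lt0r_neq0; rewrite addr_gt0 // ltr01.
  have h3 := cvgM h2 (cvgV n2 h1).
  have h4 : (fun k => - (sg * X i j) - t k * (1 - X i j ^+ 2) / (1 + rho k)) @ \oo -->
      (- (sg * X i j) - 0 * (1 - X i j ^+ 2) / (1 + 1) : R).
    apply: cvgD; first exact: cvg_cst.
    apply: cvgN; exact: h3.
  have h5 := cvgM h4 (cvgV (oner_neq0 R) rc).
  rewrite !mul0r subr0 invr1 mulr1 in h5; exact: h5.
- have e2 : (fun k => q k / t k) = (fun k => sg * (rho k)^-1).
    apply: funext => k; rewrite /q; field.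
    by rewrite !gt_eqF.
  rewrite e2; have := cvgMr (a := sg) (cvgV (oner_neq0 R) rc).
  rewrite invr1 mulr1; apply.
Qed.


Lemma inner_delta (W : M) i j : mxinner W (delta_mx i j) = W i j.
Proof.
have h1 : \sum_(c | c != i) \sum_b W c b * delta_mx i j c b = 0.
  by apply: big1 => c ci; apply: big1 => b _; rewrite mxE (negbTE ci) mulr0.
have h2 : \sum_(b | b != j) W i b * delta_mx i j i b = 0.
  by apply: big1 => b bj; rewrite mxE (negbTE bj) andbF mulr0.
rewrite mxinnerE (bigD1 i) //= h1 addr0 (bigD1 j) //= h2 addr0.
by rewrite mxE !eqxx mulr1.
Qed.

Lemma inner_XE (W X : M) j : mxinner W (X *m delta_mx j j) = \sum_c W c j * X c j.
Proof.
rewrite mxinnerE; apply: eq_bigr => c _.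
rewrite (bigD1 j) //= big1 => [|b bj]; last by rewrite XE_entry (negbTE bj) !mulr0.
by rewrite addr0 XE_entry eqxx mulr1.
Qed.

Lemma inner_H (W X : M) i j sg :
  mxinner W (sg *: (delta_mx i j - X i j *: (X *m delta_mx j j))) =
  sg * (W i j - X i j * \sum_c W c j * X c j).
Proof. by rewrite mxinnerZr mxinnerBr mxinnerZr inner_delta inner_XE. Qed.

Lemma row_zero (X : M) a b : nonneg_Stiefel X -> 0 < X a b -> forall k, k != b -> X a k = 0.
Proof.
move=> [hX0 hX1] pos k kb.
have := stiefel_entry hX1 b k; rewrite eq_sym (negbTE kb) /= => h.
have h0 : forall c, predT c -> 0 <= X c b * X c k by move=> c _; rewrite mulr_ge0.
have := @psumr_eq0P _ _ predT (fun c => X c b * X c k) h0 h a isT.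
by move/eqP; rewrite mulf_eq0 (gt_eqF pos) /= => /eqP.
Qed.

Lemma le_sum2 (f : 'I_n -> 'I_r -> R) a b : (forall a b, 0 <= f a b) ->
  f a b <= \sum_a \sum_b f a b.
Proof.
move=> f0; rewrite (bigD1 a) //= (bigD1 b) //= -addrA lerDl.
by rewrite addr_ge0 // sumr_ge0 // => c _; rewrite sumr_ge0.
Qed.


Lemma F_gen (X W : M) a b : nonneg_Stiefel X -> polar (tangent_cone nonneg_Stiefel X) W ->
  (forall k, k != b -> X a k = 0) -> W a b - X a b * \sum_c W c b * X c b <= 0.
Proof.
move=> hX hP hrow.
have x0 : 0 <= X a b by exact: (proj1 hX).
have p1 : 0 < 1 + X a b by lra.
have hs0 : 0 < (1 + X a b)^-1 by rewrite invr_gt0.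
have hu : forall u, 0 < u -> u <= (1 + X a b)^-1 ->
    0 <= 1 - 1 * u * X a b /\ 0 <= X a b - 1 * u * X a b ^+ 2 + 1 * u.
  move=> u u0 us.
  have : u * (1 + X a b) <= 1.
    by have := ler_wpM2r (ltW p1) us; rewrite mulVf ?gt_eqF.
  move=> h; split; nra.
have := hP _ (@tangent_sigma X a b 1 (1 + X a b)^-1 hX hrow (expr1n _ _) hs0 hu).
by rewrite inner_H mul1r.
Qed.

Lemma F_neg (X W : M) a b : nonneg_Stiefel X -> polar (tangent_cone nonneg_Stiefel X) W ->
  0 < X a b -> 0 <= W a b - X a b * \sum_c W c b * X c b.
Proof.
move=> hX hP pos.
have hrow := row_zero hX pos.
have p1 : 0 < 1 + X a b by lra.
have hs0 : 0 < X a b / (1 + X a b) by rewrite divr_gt0.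
have hsg : (-1 : R) ^+ 2 = 1 by rewrite sqrrN expr1n.
have hu : forall u, 0 < u -> u <= X a b / (1 + X a b) ->
    0 <= 1 - (-1) * u * X a b /\ 0 <= X a b - (-1) * u * X a b ^+ 2 + (-1) * u.
  move=> u u0 us.
  have : u * (1 + X a b) <= X a b.
    by have := ler_wpM2r (ltW p1) us; rewrite mulfVK ?gt_eqF.
  move=> h; split; nra.
have := hP _ (@tangent_sigma X a b (-1) _ hX hrow hsg hs0 hu).
by rewrite inner_H mulN1r oppr_le0.
Qed.

Lemma main_rev (X W : M) : nonneg_Stiefel X -> polar (tangent_cone nonneg_Stiefel X) W ->
  exists S : 'M[R]_r, S^T = S /\ normal_cone nonneg_cone X (W - X *m S).
Proof.
move=> hX hP.
pose d b := \sum_c W c b * X c b.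
pose C := (\sum_a \sum_b `|W a b|) * (\sum_a \sum_k (X a k)^-1).
pose S : 'M[R]_r := \matrix_(k, l) (if k == l then d k else C).
have C0 : 0 <= C.
  rewrite mulr_ge0 // sumr_ge0 // => a _; rewrite sumr_ge0 // => k _.
  by rewrite invr_ge0 (proj1 hX).
have hV : forall a b, (W - X *m S) a b <= 0 /\ (0 < X a b -> (W - X *m S) a b = 0).
  move=> a b; rewrite !mxE.
  have hsum : \sum_k X a k * S k b = X a b * d b + \sum_(k | k != b) X a k * C.
    rewrite (bigD1 b) //= mxE eqxx; congr (_ + _).
    by apply: eq_bigr => k kb; rewrite mxE (negbTE kb).
  rewrite hsum.
  have xab0 : 0 <= X a b by exact: (proj1 hX).
  have [pos | npos] := ltP 0 (X a b).
    have e0 : \sum_(k | k != b) X a k * C = 0.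
      by apply: big1 => k kb; rewrite (row_zero hX pos kb) mul0r.
    have e : W a b - (X a b * d b + \sum_(k | k != b) X a k * C) = 0.
      rewrite e0 addr0; apply/le_anti/andP; split.
        exact: (F_gen hX hP (row_zero hX pos)).
      exact: (F_neg hX hP pos).
    by rewrite e.
  have xz : X a b = 0 by apply/le_anti/andP.
  split; last by move=> h; exfalso; move: h; rewrite ?xz ?ltxx.
  have [[k [kb kpos]] | none] := pselect (exists k, k != b /\ 0 < X a k).
    rewrite xz mul0r add0r subr_le0.
    have s1 : X a k * C <= \sum_(k | k != b) X a k * C.
      rewrite (bigD1 k) //= lerDl sumr_ge0 // => k' _.
      by rewrite mulr_ge0 // (proj1 hX).
    apply: le_trans s1.
    have hA : `|W a b| <= \sum_a \sum_b `|W a b|.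
      by apply: (@le_sum2 (fun a b => `|W a b|) a b) => ? ?.
    have hB : (X a k)^-1 <= \sum_a \sum_k (X a k)^-1.
      apply: (@le_sum2 (fun a k => (X a k)^-1) a k) => a' k'.
      by rewrite invr_ge0 (proj1 hX).
    have : `|W a b| * (X a k)^-1 <= C.
      by apply: ler_pM => //; rewrite invr_ge0 ltW.
    move=> h; apply: le_trans (ler_norm _) _.
    have := ler_wpM2l (ltW kpos) h; rewrite mulrCA mulfV ?gt_eqF // mulr1.
    by [].
  have hrow : forall k, k != b -> X a k = 0.
    move=> k kb; apply/le_anti/andP; split; last exact: (proj1 hX).
    by rewrite leNgt; apply/negP => kp; apply: none; exists k.
  have e0 : \sum_(k | k != b) X a k * C = 0.
    by apply: big1 => k kb; rewrite (hrow k kb) mul0r.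
  rewrite e0 addr0; exact: (F_gen hX hP hrow).
exists S; split.
  apply/matrixP => k l; rewrite !mxE eq_sym.
  by case: eqP => [-> | _].
move=> Y hY; rewrite mxinnerBr.
have h1 : mxinner (W - X *m S) Y <= 0.
  rewrite mxinnerE; apply: sumr_le0 => a _; apply: sumr_le0 => b _.
  by apply: mulr_le0_ge0; [exact: (proj1 (hV a b)) | exact: hY].
have h2 : mxinner (W - X *m S) X = 0.
  rewrite mxinnerE; apply: big1 => a _; apply: big1 => b _.
  have xab0 : 0 <= X a b by exact: (proj1 hX).
  have [pos | npos] := ltP 0 (X a b); first by rewrite (proj2 (hV a b) pos) mul0r.
  have xz : X a b = 0 by apply/le_anti/andP.
  by rewrite xz mulr0.
by rewrite h2 subr0.
Qed.

End H.

Unset Implicit Arguments.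
Set Strict Implicit.

Theorem lemma4p3 (R : realType) (n r : nat) (O : set 'M[R]_(n, r))
  (f : 'M[R]_(n, r) -> R) (X : 'M[R]_(n, r)) :
  (1 <= r)%N -> (r <= n)%N ->
  open O -> Stiefel `<=` O ->
  (forall Y, O Y -> differentiable f Y) ->
  {within O, continuous (grad f)} ->
  nonneg_Stiefel X ->
  ((exists N V, stiefel_normal_space X N /\ normal_cone nonneg_cone X V /\
               grad f X + N + V = 0)
   <-> polar (tangent_cone nonneg_Stiefel X) (- grad f X)).
Proof.
move=> _ _ _ _ _ _ hX; split.
  move=> [N [V [[S [hS ->]] [hV hsum]]]] H hH.
  have -> : - grad f X = X *m S + V.
    by apply/eqP; rewrite eq_sym -addr_eq0 addrC addrA hsum.
  rewrite mxinnerDl (polar_N (proj2 hX) hS hH) add0r; exact: polar_V hV hH.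
move=> hP; have [S [hS hN]] := main_rev hX hP.
exists (X *m S), (- grad f X - X *m S); split; first by exists S.
split => //.
by rewrite -opprD subrr.
Qed.
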